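(* Let $A$ be a ring, $\delta=(\delta_1,\ldots,\delta_n)$ an $n$-tuple of pairwise commuting derivations of $A$, $d_i\in\mathbb{N}\cup\{\infty\}$, $I=\{\alpha\in\mathbb{N}^n\mid\alpha_i\le d_i\ \forall i\}$, and let $\{x^{[\alpha]}\mid\alpha\in I\}$ be a $\delta$-descent. Let $\{x'^{[\alpha]}\mid\alpha\in I\}\subseteq A$. The following are equivalent: (1) $\{x'^{[\alpha]}\mid\alpha\in I\}$ is a $\delta$-descent; (2) $x'^{[0]}=1$ and there are elements $\lambda_\gamma\in A^\delta$ ($0\neq\gamma\in I$) such that $x'^{[\alpha]}=x^{[\alpha]}+\sum_{0\neq\beta\le\alpha}\lambda_\beta x^{[\alpha-\beta]}$ for every $0\neq\alpha\in I$; (3) $x'^{[0]}=1$ and there are elements $\mu_\gamma\in A^\delta$ ($0\neq\gamma\in I$) such that $x'^{[\alpha]}=x^{[\alpha]}+\sum_{0\neq\beta\le\alpha}x^{[\alpha-\beta]}\mu_\beta$ for every $0\neq\alpha\in I$.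
   Context: $A^\delta=\bigcap_i\ker\delta_i$; $\beta\le\alpha$ means $\beta_i\le\alpha_i$ for all $i$; $\delta^\alpha=\delta_1^{\alpha_1}\cdots\delta_n^{\alpha_n}$. A family $\{y^{[\alpha]}\mid\alpha\in I\}$ is a $\delta$-descent if $y^{[0]}=1$ and $\delta^\alpha(y^{[\beta]})=y^{[\beta-\alpha]}$ for all $\alpha\in\mathbb{N}^n$, $\beta\in I$, where $y^{[\gamma]}:=0$ for $\gamma\notin\mathbb{N}^n$. *)

(* Defs.v *)
From HB Require Import structures.
From mathcomp Require Import all_boot all_order all_algebra.
Set Implicit Arguments. Unset Strict Implicit. Unset Printing Implicit Defensive.
Import GRing.Theory.
Local Open Scope ring_scope.

Definition mi (n : nat) := {ffun 'I_n -> nat}.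

Definition mzero n : mi n := [ffun _ => 0%N].

Definition mle n (b a : mi n) : bool := [forall i, (b i <= a i)%N].

(* componentwise difference (only used when b <= a) *)
Definition msub n (a b : mi n) : mi n := [ffun i => (a i - b i)%N].

Definition mnorm n (a : mi n) : nat := (\sum_(i < n) a i)%N.

(* The (duplicate-free) list of all beta in N^n with beta <= alpha. *)
Definition lowerset n (a : mi n) : seq (mi n) :=
  [seq b <- [seq ([ffun i => nat_of_ord (c i)] : mi n)
               | c : {ffun 'I_n -> 'I_(mnorm a).+1} <- enum {ffun 'I_n -> 'I_(mnorm a).+1}]
     | mle b a].

(* The index set I = {alpha | alpha_i <= d_i}, with d_i = None meaning infinity. *)
Definition inI n (d : 'I_n -> option nat) (a : mi n) : bool :=
  [forall i, if d i is Some k then (a i <= k)%N else true].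

Definition is_derivation (A : pzRingType) (D : A -> A) : Prop :=
  (forall a b, D (a + b) = D a + D b) /\ (forall a b, D (a * b) = D a * b + a * D b).

Definition dpow (A : pzRingType) n (delta : 'I_n -> A -> A) (a : mi n) (x : A) : A :=
  foldr (fun i y => iter (a i) (delta i) y) x (enum 'I_n).

Definition is_const (A : pzRingType) n (delta : 'I_n -> A -> A) (x : A) : Prop :=
  forall i, delta i x = 0.

(* {y^[alpha] | alpha in I} is a delta-descent; y^[gamma] := 0 for gamma not in N^n,
   i.e. delta^alpha y^[beta] = 0 unless alpha <= beta. *)
Definition is_descent (A : pzRingType) n (delta : 'I_n -> A -> A)
  (d : 'I_n -> option nat) (y : mi n -> A) : Prop :=
  y (mzero n) = 1 /\
  forall (a b : mi n), inI d b ->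
    dpow delta a (y b) = if mle a b then y (msub b a) else 0.

(* Main.v *)
Require Import Defs.
From mathcomp Require Import all_boot all_order all_algebra zify.
Import GRing.Theory.
Local Open Scope ring_scope.
Set Implicit Arguments. Unset Strict Implicit.

Definition upd n (c : mi n) (i : 'I_n) (v : nat) : mi n :=
  [ffun j => if j == i then v else c j].

Definition SD (A : pzRingType) n (delta : 'I_n -> A -> A) (d : 'I_n -> option nat)
  (y : mi n -> A) : Prop :=
  forall i b, inI d b -> delta i (y b) = if (0 < b i)%N then y (upd b i (b i).-1) else 0.

Section Der.
Variables (A : pzRingType) (D : A -> A).
Hypothesis hD : is_derivation D.
Lemma D0 : D 0 = 0.
Proof. case: hD => Ha _; have := Ha 0 0; rewrite addr0 => H.
by apply: (@addrI _ (D 0)); rewrite addr0 -H. Qed.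
Lemma D1 : D 1 = 0.
Proof. case: hD => _ Hm; have := Hm 1 1; rewrite mulr1 mul1r mulr1 => H.
by apply: (@addrI _ (D 1)); rewrite addr0 -H. Qed.
Lemma DN z : D (- z) = - D z.
Proof. case: hD => Ha _; have := Ha z (- z); rewrite subrr D0 => H.
apply/eqP; rewrite -addr_eq0 addrC -H //. Qed.
Lemma DB a b : D (a - b) = D a - D b.
Proof. by case: hD => Ha _; rewrite Ha DN. Qed.
Lemma Dsum (I : Type) (s : seq I) (P : pred I) (F : I -> A) :
  D (\sum_(c <- s | P c) F c) = \sum_(c <- s | P c) D (F c).
Proof. by case: hD => Ha _; apply: (big_morph D Ha D0). Qed.
Lemma iter0 k : iter k D 0 = 0.
Proof. by elim: k => //= k ->; rewrite D0. Qed.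
End Der.

Lemma inI_le n (d : 'I_n -> option nat) (b c : mi n) :
  inI d b -> (forall j, (c j <= b j)%N) -> inI d c.
Proof.
move=> /forallP Hb Hc; apply/forallP => j; have := Hb j; have := Hc j.
by case: (d j) => // k; apply: leq_trans.
Qed.

Lemma upd_id n (c : mi n) i : upd c i (c i) = c.
Proof. by apply/ffunP => j; rewrite ffunE; case: eqP => // ->. Qed.

Lemma upd_upd n (c : mi n) i v w : upd (upd c i v) i w = upd c i w.
Proof. by apply/ffunP => j; rewrite !ffunE; case: eqP. Qed.

Lemma upd_i n (c : mi n) i v : upd c i v i = v.
Proof. by rewrite ffunE eqxx. Qed.

Lemma mleP n (b a : mi n) : reflect (forall i, (b i <= a i)%N) (mle b a).
Proof. exact: forallP. Qed.

Lemma mle_trans n (a b c : mi n) : mle a b -> mle b c -> mle a c.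
Proof. move=> /mleP H1 /mleP H2; apply/mleP => i; exact: leq_trans (H1 i) (H2 i). Qed.

Lemma mle0 n (c : mi n) : mle c (mzero n) -> c = mzero n.
Proof. move=> /mleP H; apply/ffunP => j; move: (H j); rewrite !ffunE leqn0; exact/eqP. Qed.

Lemma le_mnorm n (a : mi n) i : (a i <= mnorm a)%N.
Proof. by rewrite /mnorm (bigD1 i) //= leq_addr. Qed.

Lemma mnorm_lt n (b a : mi n) : mle b a -> b != a -> (mnorm b < mnorm a)%N.
Proof.
move=> /mleP H Hne; case: (pickP (fun i => b i < a i)%N) => [i Hi|H0].
  rewrite /mnorm (bigD1 i) //= [X in (_ < X)%N](bigD1 i) //=.
  have : (\sum_(j < n | j != i) b j <= \sum_(j < n | j != i) a j)%N.
    by apply: leq_sum => j _.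
  by move=> H'; rewrite -addSn leq_add.
case/eqP: Hne; apply/ffunP => j; apply/eqP; rewrite eqn_leq H /=.
by move: (H0 j) => /= /negbT; rewrite -leqNgt.
Qed.

Lemma mem_lowerset n (a b : mi n) : (b \in lowerset a) = mle b a.
Proof.
rewrite mem_filter; case Hb: (mle b a) => //=.
apply/mapP; exists [ffun i => (inord (b i) : 'I_(mnorm a).+1)]; first by rewrite mem_enum.
apply/ffunP => i; rewrite !ffunE inordK //; move/mleP: Hb => Hb.
by rewrite ltnS (leq_trans (Hb i)) // le_mnorm.
Qed.

Lemma uniq_lowerset n (a : mi n) : uniq (lowerset a).
Proof.
apply: filter_uniq; rewrite map_inj_uniq ?enum_uniq // => c1 c2 H.
apply/ffunP => i; apply: val_inj; have := congr1 (fun f : mi n => f i) H.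
by rewrite !ffunE.
Qed.

Lemma lowerset_perm n (a a' : mi n) : mle a' a ->
  perm_eq [seq c <- lowerset a | mle c a'] (lowerset a').
Proof.
move=> H; apply: uniq_perm; rewrite ?(filter_uniq _ (uniq_lowerset a)) ?uniq_lowerset // => c.
rewrite mem_filter !mem_lowerset; case E: (mle c a') => //=.
exact: mle_trans E H.
Qed.

Definition ei n (i : 'I_n) : mi n := [ffun j => if j == i then 1%N else 0%N].
Definition subS n (s : seq 'I_n) (a b : mi n) : mi n :=
  [ffun j => if j \in s then (b j - a j)%N else b j].

Section Desc.
Variables (A : pzRingType) (n : nat) (delta : 'I_n -> A -> A) (d : 'I_n -> option nat).
Hypothesis hder : forall i, is_derivation (delta i).

Lemma iter_step (y : mi n -> A) i k c : SD delta d y -> inI d c ->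
  iter k (delta i) (y c) = if (k <= c i)%N then y (upd c i (c i - k)) else 0.
Proof.
move=> Hy Hc; elim: k => [|k IH]; first by rewrite /= subn0 upd_id.
rewrite iterS IH; case: (leqP k (c i)) => Hk.
  rewrite Hy; last by eapply inI_le; first exact Hc; move=> j; rewrite ffunE; case: eqP => // ->; apply: leq_subr.
  rewrite upd_i upd_upd; case: (ltnP k (c i)) => Hk2.
    by rewrite subn_gt0 Hk2; congr (y (upd _ _ _)); lia.
  have -> : (c i - k = 0)%N by lia.
  by [].
by rewrite D0 // ltnNge ltnW.
Qed.

Lemma foldr_step (y : mi n -> A) (a b : mi n) (s : seq 'I_n) : SD delta d y -> inI d b ->
  uniq s ->
  foldr (fun j z => iter (a j) (delta j) z) (y b) s =
  if all (fun j => a j <= b j)%N s then y (subS s a b) else 0.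
Proof.
move=> Hy Hb; elim: s => [|i s IH] /=.
  by move=> _; congr y; apply/ffunP => j; rewrite ffunE.
case/andP=> Hi Hs; rewrite IH //.
case: (all _ s) => /=; last by rewrite iter0 // andbF.
have Hc : inI d (subS s a b).
  eapply inI_le; first exact Hb; move=> j; rewrite ffunE; case: (_ \in _) => //; apply: leq_subr.
rewrite iter_step // andbT.
have -> : subS s a b i = b i by rewrite ffunE (negbTE Hi).
case: leqP => // _; congr y; apply/ffunP => j; rewrite !ffunE inE.
by case: eqP => [->|_].
Qed.

Lemma SD_descent (y : mi n -> A) : y (mzero n) = 1 -> SD delta d y -> is_descent delta d y.
Proof.
move=> H0 Hy; split => // a b Hb; rewrite /dpow foldr_step ?enum_uniq //.
have -> : all (fun j => a j <= b j)%N (enum 'I_n) = mle a b.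
  by apply/allP/forallP => H j; [apply: H; rewrite mem_enum | move=> _; apply: H].
case: ifP => // _; congr y; apply/ffunP => j; rewrite !ffunE mem_enum //.
Qed.

Lemma dpow_ei i (z : A) : dpow delta (ei i) z = delta i z.
Proof.
rewrite /dpow; have : forall s : seq 'I_n,
  foldr (fun j z => iter (ei i j) (delta j) z) z s = iter (count_mem i s) (delta i) z.
  elim => [|j s IH] //=; rewrite IH ffunE; case: eqP => [->|] //=.
move=> ->; rewrite count_uniq_mem ?enum_uniq // mem_enum //.
Qed.

Lemma descent_SD (y : mi n -> A) : is_descent delta d y -> y (mzero n) = 1 /\ SD delta d y.
Proof.
case=> H0 Hy; split => // i b Hb; rewrite -dpow_ei Hy //.
have -> : mle (ei i) b = (0 < b i)%N.
  apply/forallP/idP => [/(_ i)|H j]; first by rewrite ffunE eqxx.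
  by rewrite ffunE; case: eqP => [->|].
case: ifP => // _; congr y; apply/ffunP => j; rewrite !ffunE.
by case: eqP => [->|]; rewrite ?subn1 ?subn0.
Qed.
End Desc.

Lemma mle_upd n (c a : mi n) i : mle c a -> (0 < a i)%N ->
  mle c (upd a i (a i).-1) = (c i < a i)%N.
Proof.
move=> /mleP H Hai; apply/mleP/idP => [/(_ i)|Hci j]; first by rewrite upd_i; lia.
rewrite ffunE; case: eqP => [->|_] //; lia.
Qed.

Lemma msub_upd n (c a : mi n) i : (c i < a i)%N ->
  upd (msub a c) i ((msub a c i).-1) = msub (upd a i (a i).-1) c.
Proof.
move=> H; apply/ffunP => j; rewrite !ffunE; case: eqP => [->|_] //; lia.
Qed.

Lemma mle_refl n (a : mi n) : mle a a.
Proof. by apply/mleP. Qed.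

Lemma msub_aa n (a : mi n) : msub a a = mzero n.
Proof. by apply/ffunP => j; rewrite !ffunE subnn. Qed.

Lemma msub_le n (a c : mi n) j : (msub a c j <= a j)%N.
Proof. by rewrite ffunE leq_subr. Qed.

Section Gen.
Variables (A : pzRingType) (n : nat) (delta : 'I_n -> A -> A) (d : 'I_n -> option nat).
Variables (x : mi n -> A) (m : A -> A -> A).
Hypothesis hder : forall i, is_derivation (delta i).
Hypothesis hx0 : x (mzero n) = 1.
Hypothesis hx : SD delta d x.
Hypothesis hm0 : forall l, m l 0 = 0.
Hypothesis hm1 : forall l, m l 1 = l.
Hypothesis hmc : forall l z i, is_const delta l -> delta i (m l z) = m l (delta i z).

Lemma dsum (lam : mi n -> A) (P : pred (mi n)) a i : inI d a ->
  (forall c, mle c a -> P c -> is_const delta (lam c)) ->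
  delta i (\sum_(c <- lowerset a | P c) m (lam c) (x (msub a c))) =
  if (0 < a i)%N then \sum_(c <- lowerset (upd a i (a i).-1) | P c)
     m (lam c) (x (msub (upd a i (a i).-1) c)) else 0.
Proof.
move=> Ha Hl; rewrite Dsum //; case: (posnP (a i)) => Hai.
  rewrite big_seq_cond big1 // => c /andP[Hc Pc]; rewrite mem_lowerset in Hc.
  rewrite hmc; last exact: Hl. rewrite hx; last by eapply inI_le; first exact Ha; apply: msub_le.
  by rewrite ffunE Hai sub0n /= hm0.
rewrite -(perm_big _ (lowerset_perm (_ : mle (upd a i (a i).-1) a))); last first.
  by apply/mleP => j; rewrite ffunE; case: eqP => [->|] //; rewrite leq_pred.
rewrite [RHS]big_filter_cond [RHS]big_mkcondl [LHS]big_seq_cond [RHS]big_seq_cond.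
apply: eq_bigr => c /andP[Hc Pc]; rewrite mem_lowerset in Hc.
rewrite hmc; last exact: Hl. rewrite hx; last by eapply inI_le; first exact Ha; apply: msub_le.
rewrite mle_upd // {1}ffunE subn_gt0; case: ifP => [Hci|_]; last by rewrite hm0.
by rewrite msub_upd.
Qed.

Lemma fwd (x' lam : mi n -> A) : x' (mzero n) = 1 ->
  (forall g, inI d g -> g != mzero n -> is_const delta (lam g)) ->
  (forall a, inI d a -> a != mzero n ->
     x' a = x a + \sum_(b <- lowerset a | b != mzero n) m (lam b) (x (msub a b))) ->
  SD delta d x'.
Proof.
move=> H0 Hl He i b Hb; case: (eqVneq b (mzero n)) => [->|Hb0].
  by rewrite H0 D1 // ffunE ltnn.
rewrite He //; case: (hder i) => Hadd _; rewrite Hadd hx // dsum //; last first.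
  move=> c Hc Hc0; apply: Hl => //; eapply inI_le; first exact Hb; exact/mleP.
case: (posnP (b i)) => Hbi; first by rewrite addr0.
have Hb' : inI d (upd b i (b i).-1).
  eapply inI_le; first exact Hb; move=> j; rewrite ffunE; case: eqP => [->|] //.
  by rewrite leq_pred.
case: (eqVneq (upd b i (b i).-1) (mzero n)) => [E|E].
  rewrite E H0 hx0 big_seq_cond big1 ?addr0 // => c /andP[Hc Hc0].
  by rewrite mem_lowerset in Hc; rewrite (mle0 Hc) eqxx in Hc0.
by rewrite (He _ Hb' E).
Qed.

Variable x' : mi n -> A.

Fixpoint lamF (k : nat) (a : mi n) : A :=
  if k is k'.+1 then
    x' a - x a - \sum_(b <- lowerset a | (b != mzero n) && (b != a)) m (lamF k' b) (x (msub a b))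
  else 0.

Lemma lamF_stable k : forall a k1 k2, (mnorm a < k)%N -> (mnorm a < k1)%N ->
  (mnorm a < k2)%N -> lamF k1 a = lamF k2 a.
Proof.
elim: k => // k IH a [|k1] [|k2] // Hk Hk1 Hk2 /=; congr (_ - _).
rewrite big_seq_cond [RHS]big_seq_cond; apply: eq_bigr => b /andP[Hb /andP[_ Hba]].
rewrite mem_lowerset in Hb; have Hlt := mnorm_lt Hb Hba.
by rewrite (IH b k1 k2) //; lia.
Qed.

Definition lam a := lamF (mnorm a).+1 a.

Lemma lam_eq a : lam a = x' a - x a -
  \sum_(b <- lowerset a | (b != mzero n) && (b != a)) m (lam b) (x (msub a b)).
Proof.
rewrite /lam /=; congr (_ - _).
rewrite big_seq_cond [RHS]big_seq_cond; apply: eq_bigr => b /andP[Hb /andP[_ Hba]].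
rewrite mem_lowerset in Hb; have Hlt := mnorm_lt Hb Hba.
by rewrite /lam (@lamF_stable (mnorm a) b (mnorm a) (mnorm b).+1) //; lia.
Qed.

Lemma lam_eqn a : a != mzero n ->
  x' a = x a + \sum_(b <- lowerset a | b != mzero n) m (lam b) (x (msub a b)).
Proof.
move=> Ha; rewrite -big_filter (bigD1_seq a); last first.
- exact: (filter_uniq _ (uniq_lowerset a)).
- by rewrite mem_filter Ha mem_lowerset mle_refl.
rewrite big_filter_cond msub_aa hx0 hm1 [lam a]lam_eq.
by rewrite /= subrK addrC subrK.
Qed.

Lemma lam_const (hx'0 : x' (mzero n) = 1) (hx' : SD delta d x') k :
  forall a, (mnorm a < k)%N -> inI d a -> a != mzero n -> is_const delta (lam a).
Proof.
elim: k => // k IH a Hk Ha Ha0 i.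
rewrite lam_eq !DB // dsum //; last first.
  move=> c Hc /andP[Hc0 Hca]; apply: IH => //.
  - by have := mnorm_lt Hc Hca; lia.
  - by eapply inI_le; first exact Ha; exact/mleP.
rewrite hx' // hx //; case: (posnP (a i)) => Hai; first by rewrite !subr0.
have Hb' : inI d (upd a i (a i).-1).
  eapply inI_le; first exact Ha; move=> j; rewrite ffunE; case: eqP => [->|] //.
  by rewrite leq_pred.
have -> : \sum_(b <- lowerset (upd a i (a i).-1) | (b != mzero n) && (b != a))
     m (lam b) (x (msub (upd a i (a i).-1) b)) =
   \sum_(b <- lowerset (upd a i (a i).-1) | b != mzero n)
     m (lam b) (x (msub (upd a i (a i).-1) b)).
  rewrite [LHS]big_seq_cond [RHS]big_seq_cond; apply: eq_bigl => c.
  case Hc: (c \in _) => //=; rewrite mem_lowerset in Hc.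
  have -> : c != a.
    by apply/eqP => E; move/mleP: Hc => /(_ i); rewrite E upd_i; lia.
  by rewrite andbT.
case: (eqVneq (upd a i (a i).-1) (mzero n)) => [E|E].
  rewrite E hx'0 hx0 big_seq_cond big1 ?subrr ?subr0 // => c /andP[Hc Hc0].
  by rewrite mem_lowerset in Hc; rewrite (mle0 Hc) eqxx in Hc0.
by rewrite (lam_eqn E) [x _ + _]addrC addrK subrr.
Qed.

Lemma gen : is_descent delta d x' <->
   (x' (mzero n) = 1 /\
    exists lam : mi n -> A,
      (forall g, inI d g -> g != mzero n -> is_const delta (lam g)) /\
      (forall a, inI d a -> a != mzero n ->
         x' a = x a + \sum_(b <- lowerset a | b != mzero n) m (lam b) (x (msub a b)))).
Proof.
split.
  move/descent_SD => [H0 HS]; split => //; exists lam; split.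
    by move=> g Hg Hg0; apply: (lam_const H0 HS (k := (mnorm g).+1)).
  by move=> a _ Ha; apply: lam_eqn.
case=> H0 [l [Hl He]]; apply: SD_descent => //; exact: fwd Hl He.
Qed.
End Gen.

Theorem lemma2p2 (A : pzRingType) (n : nat) (delta : 'I_n -> A -> A)
  (d : 'I_n -> option nat) (x x' : mi n -> A) :
  (forall i, is_derivation (delta i)) ->
  (forall i j a, delta i (delta j a) = delta j (delta i a)) ->
  is_descent delta d x ->
  (is_descent delta d x' <->
   (x' (mzero n) = 1 /\
    exists lam : mi n -> A,
      (forall g, inI d g -> g != mzero n -> is_const delta (lam g)) /\
      (forall a, inI d a -> a != mzero n ->
         x' a = x a + \sum_(b <- lowerset a | b != mzero n) lam b * x (msub a b))))
  /\
  (is_descent delta d x' <->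
   (x' (mzero n) = 1 /\
    exists mu : mi n -> A,
      (forall g, inI d g -> g != mzero n -> is_const delta (mu g)) /\
      (forall a, inI d a -> a != mzero n ->
         x' a = x a + \sum_(b <- lowerset a | b != mzero n) x (msub a b) * mu b))).
Proof.
move=> hder _ /descent_SD [hx0 hx]; split.
  apply: (gen (m := fun l z => l * z)) => //.
  - by move=> l; rewrite mulr0.
  - by move=> l; rewrite mulr1.
  - by move=> l z i Hl; case: (hder i) => _ Hm; rewrite Hm Hl mul0r add0r.
apply: (gen (m := fun l z => z * l)) => //.
- by move=> l; rewrite mul0r.
- by move=> l; rewrite mul1r.
- by move=> l z i Hl; case: (hder i) => _ Hm; rewrite Hm Hl mulr0 addr0.
Qed.
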